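(* Let $r=a/b$ with $a,b$ coprime positive integers, and for $\theta\in\mathbb{R}$ define $\mathcal R_\theta^*f(z,t)=f(e^{i\theta}z,t)$. Then for $f\in C_c^\infty(\overline{\mathbb{H}})$ and $(z,t)\in\overline{\mathbb{H}}$, $$I_r(\mathcal R_\theta^*f)(z,t)=(I_rf)\big(e^{i\theta}z,\ t-\tfrac12 r\theta\big),$$ and consequently $$I_r(\partial_\theta f)(z,t)=\big(\partial_\theta-\tfrac12 rT\big)I_rf(z,t).$$
   Context: $\mathbb{H}=\mathbb{C}\times\mathbb{R}$ (coordinates $z=x+iy$, $t$) with product $(x+iy,t)(u+iv,s)=(x+u+i(y+v),\,t+s+\tfrac12(xv-yu))$; $\overline{\mathbb{H}}=\mathbb{H}/\{(0,k\pi):k\in\mathbb{Z}\}\cong\mathbb{C}\times(\mathbb{R}/\pi\mathbb{Z})$. For $r=a/b$, $\gamma_r(s)=(\sqrt r e^{is/\sqrt r},\tfrac12\sqrt r s)$ and $I_rf(z,t)=\int_0^{2\pi\sqrt{ab}}f((z,t)\gamma_r(s))\,ds$. $T=\partial_t$, and $\partial_\theta=x\partial_y-y\partial_x$ is the rotational derivative in the $z$ variable, i.e. $\partial_\theta f=\frac{d}{d\theta}\big|_{\theta=0}\mathcal R^*_\theta f$. *)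

(* Defs.v *)
From Stdlib Require Import Reals.
From Coquelicot Require Import Coquelicot.
Open Scope R_scope.

(* A function on the Heisenberg group H = C x R, written in real coordinates
   (x, y, t) with z = x + i y. *)
Definition HFun := R -> R -> R -> C.

Definition hmul (p q : R * R * R) : R * R * R :=
  let '(x, y, t) := p in let '(u, v, s) := q in
  (x + u, y + v, t + s + / 2 * (x * v - y * u)).

Definition gamma (r s : R) : R * R * R :=
  (sqrt r * cos (s / sqrt r), sqrt r * sin (s / sqrt r), / 2 * sqrt r * s).

Definition evalH (f : HFun) (p : R * R * R) : C :=
  let '(x, y, t) := p in f x y t.

Definition ratio (a b : nat) : R := INR a / INR b.

Definition Ir (a b : nat) (f : HFun) : HFun := fun x y t =>
  RInt (V := C_R_CompleteNormedModule)
    (fun s => evalH f (hmul (x, y, t) (gamma (ratio a b) s)))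
    0 (2 * PI * sqrt (INR a * INR b)).

Definition rotx (th x y : R) : R := cos th * x - sin th * y.
Definition roty (th x y : R) : R := sin th * x + cos th * y.

Definition Rot (th : R) (f : HFun) : HFun := fun x y t => f (rotx th x y) (roty th x y) t.

Definition cont3 (f : HFun) : Prop :=
  forall x y t, continuous (fun p : R * R * R => evalH f p) (x, y, t).

Fixpoint Ck (k : nat) (f : HFun) : Prop :=
  cont3 f /\
  match k with
  | O => True
  | S m => exists fx fy ft : HFun,
      (forall x y t, is_derive (K := R_AbsRing) (V := C_R_NormedModule)
                       (fun u => f u y t) x (fx x y t)) /\
      (forall x y t, is_derive (K := R_AbsRing) (V := C_R_NormedModule)
                       (fun v => f x v t) y (fy x y t)) /\
      (forall x y t, is_derive (K := R_AbsRing) (V := C_R_NormedModule)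
                       (fun s => f x y s) t (ft x y t)) /\
      Ck m fx /\ Ck m fy /\ Ck m ft
  end.

Definition smooth (f : HFun) : Prop := forall k, Ck k f.

(* f descends to the reduced Heisenberg group Hbar = H / {(0, k pi)},
   i.e. is pi-periodic in t. *)
Definition periodic_t (f : HFun) : Prop := forall x y t, f x y (t + PI) = f x y t.

(* Compact support on Hbar = C x (R / pi Z): the support is bounded in z. *)
Definition bounded_z_support (f : HFun) : Prop :=
  exists M : R, forall x y t, M < x ^ 2 + y ^ 2 -> f x y t = 0.

Definition Cc_infty_Hbar (f : HFun) : Prop :=
  smooth f /\ periodic_t f /\ bounded_z_support f.

(* Main.v *)
Require Import Defs.
From Stdlib Require Import Reals Lra Classical ClassicalEpsilon.
From Coquelicot Require Import Coquelicot.
Open Scope R_scope.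

Lemma derive_eps {V : NormedModule R_AbsRing} (g : R -> V) x l :
  (forall eps, 0 < eps -> exists del, 0 < del /\ forall y, Rabs (y - x) < del ->
     norm (minus (minus (g y) (g x)) (scal (y - x) l)) <= eps * Rabs (y - x)) ->
  is_derive g x l.
Proof.
  intros H. split. apply is_linear_scal_l.
  intros x0 Hx0. apply (@is_filter_lim_locally_unique R_AbsRing R_NormedModule) in Hx0. subst x0.
  intros eps. destruct (H eps (cond_pos eps)) as [d [Hd Hy]].
  exists (mkposreal d Hd). intros y Hb. apply Hy. exact Hb.
Qed.

Lemma mvi {V : CompleteNormedModule R_AbsRing} (g g' : R -> V) a b l eps :
  (forall u, Rmin a b <= u <= Rmax a b -> is_derive g u (g' u)) ->
  (forall u, Rmin a b <= u <= Rmax a b -> continuous g' u) ->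
  (forall u, Rmin a b <= u <= Rmax a b -> norm (minus (g' u) l) <= eps) ->
  norm (minus (minus (g b) (g a)) (scal (b - a) l)) <= Rabs (b - a) * eps.
Proof.
  intros Hd Hc Hb.
  pose proof (is_RInt_derive g g' a b Hd Hc) as H1.
  pose proof (is_RInt_minus _ _ _ _ _ _ H1 (is_RInt_const a b l)) as H2.
  exact (norm_RInt_le_const_abs _ _ _ _ _ Hb H2).
Qed.

Lemma norm_C (z : C) : @norm R_AbsRing C_R_NormedModule z = Cmod z.
Proof.
  destruct z as [a b]. unfold norm; simpl. unfold prod_norm, Cmod; simpl.
  change (norm a) with (Rabs a); change (norm b) with (Rabs b).
  rewrite !Rmult_1_r, <- !Rabs_mult, !(Rabs_pos_eq (_ * _)) by apply Rle_0_sqr. reflexivity.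
Qed.

Lemma scal_C (k : R) (z : C) : @scal R_AbsRing C_R_ModuleSpace k z = Cmult (RtoC k) z.
Proof.
  destruct z as [a b]. unfold scal, Cmult; simpl. unfold scal; simpl. unfold mult; simpl.
  unfold prod_scal; simpl. unfold scal; simpl. unfold mult; simpl. apply injective_projections; simpl; ring.
Qed.

Lemma ball_R (a b e : R) : Rabs (b - a) < e -> @ball R_UniformSpace a e b.
Proof. intros H. exact H. Qed.

Lemma cont3_eps (g : HFun) x y t : cont3 g -> forall eps, 0 < eps ->
  exists del, 0 < del /\ forall u v w, Rabs (u - x) < del -> Rabs (v - y) < del ->
    Rabs (w - t) < del -> Cmod (Cminus (g u v w) (g x y t)) < eps.
Proof.
  intros Hc eps He. specialize (Hc x y t).
  assert (Hp : 0 < eps / @norm_factor R_AbsRing C_R_NormedModule).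
  { apply Rdiv_lt_0_compat; [exact He | apply norm_factor_gt_0]. }
  apply (proj1 (filterlim_locally _ _)) with (eps := mkposreal _ Hp) in Hc.
  destruct Hc as [d Hd]. exists d. split. apply cond_pos.
  intros u v w Hu Hv Hw.
  assert (Hb := Hd (u, v, w) (conj (conj (ball_R _ _ _ Hu) (ball_R _ _ _ Hv)) (ball_R _ _ _ Hw))).
  apply (@norm_compat2 R_AbsRing C_R_NormedModule) in Hb.
  rewrite norm_C in Hb. simpl in Hb.
  replace eps with (@norm_factor R_AbsRing C_R_NormedModule * (eps / @norm_factor R_AbsRing C_R_NormedModule)).
  exact Hb. field. apply Rgt_not_eq, norm_factor_gt_0.
Qed.

Lemma eps_derive {V : NormedModule R_AbsRing} (g : R -> V) x l :
  is_derive g x l -> forall eps, 0 < eps -> exists del, 0 < del /\ forall y, Rabs (y - x) < del ->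
     norm (minus (minus (g y) (g x)) (scal (y - x) l)) <= eps * Rabs (y - x).
Proof.
  intros [_ Hd] eps He. specialize (Hd x (fun P H => H)).
  destruct (Hd (mkposreal eps He)) as [d Hd']. exists d. split. apply cond_pos.
  intros y Hy. exact (Hd' y Hy).
Qed.

Lemma cont_pair {T U V : UniformSpace} (a : T -> U) (b : T -> V) z :
  continuous a z -> continuous b z -> continuous (fun w => (a w, b w)) z.
Proof.
  intros Ha Hb. apply (proj2 (filterlim_locally _ _)). intros eps.
  apply (proj1 (filterlim_locally _ _)) with (eps:=eps) in Ha.
  apply (proj1 (filterlim_locally _ _)) with (eps:=eps) in Hb.
  generalize (filter_and _ _ Ha Hb). apply filter_imp. intros w [H1 H2]. split; assumption.
Qed.

Lemma cont3_comp {T : UniformSpace} (g : HFun) (a b c : T -> R) z :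
  cont3 g -> continuous a z -> continuous b z -> continuous c z ->
  continuous (fun w => g (a w) (b w) (c w)) z.
Proof.
  intros Hg Ha Hb Hc.
  assert (Hp := cont_pair _ _ z (cont_pair _ _ z Ha Hb) Hc).
  exact (continuous_comp _ (fun p => evalH g p) z Hp (Hg (a z) (b z) (c z))).
Qed.

Lemma minus_C (a b : C) : @minus C_R_ModuleSpace a b = Cminus a b.
Proof. reflexivity. Qed.

Lemma cont_R_id x : continuous (fun u : R => u) x.
Proof. apply continuous_id. Qed.

Lemma mvi_C (g g' : R -> C) a b l eps :
  (forall u, is_derive (K:=R_AbsRing) (V:=C_R_NormedModule) g u (g' u)) ->
  (forall u, continuous g' u) ->
  (forall u, Rmin a b <= u <= Rmax a b -> Cmod (Cminus (g' u) l) <= eps) ->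
  Cmod (Cminus (Cminus (g b) (g a)) (Cmult (RtoC (b - a)) l)) <= Rabs (b - a) * eps.
Proof.
  intros Hd Hc Hb.
  pose proof (@mvi C_R_CompleteNormedModule g g' a b l eps (fun u _ => Hd u) (fun u _ => Hc u)) as H.
  rewrite <- norm_C, <- scal_C. apply H. intros u Hu. rewrite norm_C. apply Hb; exact Hu.
Qed.

Lemma between_abs a b u : Rmin a b <= u <= Rmax a b -> Rabs (u - a) <= Rabs (b - a).
Proof.
  unfold Rmin, Rmax. destruct (Rle_dec a b); intros [H1 H2];
  unfold Rabs; destruct (Rcase_abs (u - a)); destruct (Rcase_abs (b - a)); lra.
Qed.

Lemma cmod_mult_R (r : R) (z : C) : Cmod (Cmult (RtoC r) z) = Rabs r * Cmod z.
Proof. rewrite Cmod_mult, Cmod_R. reflexivity. Qed.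

Definition isderC (g : R -> C) x (l : C) := is_derive (K:=R_AbsRing) (V:=C_R_NormedModule) g x l.

Lemma chain3 (f fx fy ft : HFun) (p1 p2 p3 : R -> R) d1 d2 d3 th0 :
  (forall x y t, isderC (fun u => f u y t) x (fx x y t)) ->
  (forall x y t, isderC (fun v => f x v t) y (fy x y t)) ->
  (forall x y t, isderC (fun s => f x y s) t (ft x y t)) ->
  cont3 fx -> cont3 fy -> cont3 ft ->
  is_derive p1 th0 d1 -> is_derive p2 th0 d2 -> is_derive p3 th0 d3 ->
  isderC (fun th => f (p1 th) (p2 th) (p3 th)) th0
    (Cplus (Cmult (RtoC d1) (fx (p1 th0) (p2 th0) (p3 th0)))
       (Cplus (Cmult (RtoC d2) (fy (p1 th0) (p2 th0) (p3 th0)))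
              (Cmult (RtoC d3) (ft (p1 th0) (p2 th0) (p3 th0))))).
Proof.
  intros Hx Hy Ht Cx Cy Ct D1 D2 D3.
  apply derive_eps. intros eps He.
  set (q1 := p1 th0). set (q2 := p2 th0). set (q3 := p3 th0).
  set (F1 := fx q1 q2 q3). set (F2 := fy q1 q2 q3). set (F3 := ft q1 q2 q3).
  set (D := Rabs d1 + Rabs d2 + Rabs d3 + 3).
  set (M := Cmod F1 + Cmod F2 + Cmod F3 + 1).
  assert (HD : 0 < D) by (unfold D; pose proof (Rabs_pos d1); pose proof (Rabs_pos d2); pose proof (Rabs_pos d3); lra).
  assert (HM : 0 < M) by (unfold M; pose proof (Cmod_ge_0 F1); pose proof (Cmod_ge_0 F2); pose proof (Cmod_ge_0 F3); lra).
  set (e1 := eps / (2 * D)). set (e2 := Rmin 1 (eps / (2 * M))).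
  assert (He1 : 0 < e1) by (unfold e1; apply Rdiv_lt_0_compat; lra).
  assert (He2 : 0 < e2) by (unfold e2; apply Rmin_pos; [lra| apply Rdiv_lt_0_compat; lra]).
  destruct (cont3_eps fx q1 q2 q3 Cx e1 He1) as [n1 [Hn1 N1]].
  destruct (cont3_eps fy q1 q2 q3 Cy e1 He1) as [n2 [Hn2 N2]].
  destruct (cont3_eps ft q1 q2 q3 Ct e1 He1) as [n3 [Hn3 N3]].
  set (n := Rmin n1 (Rmin n2 n3)).
  assert (Hn : 0 < n) by (unfold n; repeat apply Rmin_pos; lra).
  assert (Hnn : n <= n1 /\ n <= n2 /\ n <= n3).
  { unfold n. pose proof (Rmin_l n1 (Rmin n2 n3)). pose proof (Rmin_r n1 (Rmin n2 n3)).
    pose proof (Rmin_l n2 n3). pose proof (Rmin_r n2 n3). lra. }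
  destruct (eps_derive p1 th0 d1 D1 e2 He2) as [k1 [Hk1 K1]].
  destruct (eps_derive p2 th0 d2 D2 e2 He2) as [k2 [Hk2 K2]].
  destruct (eps_derive p3 th0 d3 D3 e2 He2) as [k3 [Hk3 K3]].
  exists (Rmin (Rmin k1 (Rmin k2 k3)) (n / D)).
  split. { repeat apply Rmin_pos; try lra. apply Rdiv_lt_0_compat; lra. }
  intros y Hyd.
  set (h := y - th0) in *.
  assert (Hh : Rabs h < k1 /\ Rabs h < k2 /\ Rabs h < k3 /\ Rabs h < n / D).
  { pose proof (Rmin_l (Rmin k1 (Rmin k2 k3)) (n / D)). pose proof (Rmin_r (Rmin k1 (Rmin k2 k3)) (n / D)).
    pose proof (Rmin_l k1 (Rmin k2 k3)). pose proof (Rmin_r k1 (Rmin k2 k3)).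
    pose proof (Rmin_l k2 k3). pose proof (Rmin_r k2 k3). lra. }
  destruct Hh as [Hh1 [Hh2 [Hh3 Hh4]]].
  assert (B1 : Rabs (p1 y - q1 - h * d1) <= e2 * Rabs h) by exact (K1 y Hh1).
  assert (B2 : Rabs (p2 y - q2 - h * d2) <= e2 * Rabs h) by exact (K2 y Hh2).
  assert (B3 : Rabs (p3 y - q3 - h * d3) <= e2 * Rabs h) by exact (K3 y Hh3).
  assert (He21 : e2 <= 1) by apply Rmin_l.
  assert (He2M : e2 * M <= eps / 2).
  { apply Rle_trans with ((eps / (2 * M)) * M). apply Rmult_le_compat_r. lra. apply Rmin_r.
    right. field. lra. }
  assert (Hhn : Rabs h * D < n).
  { apply Rmult_lt_reg_r with (/ D). apply Rinv_0_lt_compat; lra.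
    rewrite Rmult_assoc, Rinv_r, Rmult_1_r by lra. exact Hh4. }
  assert (Pd : forall p q d, Rabs (p - q - h * d) <= e2 * Rabs h -> Rabs (p - q) <= (Rabs d + 1) * Rabs h).
  { intros p q d Hb. replace (p - q) with ((p - q - h * d) + h * d) by ring.
    eapply Rle_trans. apply Rabs_triang. rewrite Rabs_mult.
    pose proof (Rabs_pos h). nra. }
  pose proof (Pd _ _ _ B1) as P1. pose proof (Pd _ _ _ B2) as P2. pose proof (Pd _ _ _ B3) as P3.
  assert (Hpn : Rabs (p1 y - q1) < n /\ Rabs (p2 y - q2) < n /\ Rabs (p3 y - q3) < n).
  { pose proof (Rabs_pos h). pose proof (Rabs_pos d1). pose proof (Rabs_pos d2). pose proof (Rabs_pos d3).
    unfold D in Hhn. repeat split; nra. }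
  destruct Hpn as [Hp1 [Hp2 Hp3]].
  assert (A1 : Cmod (Cminus (Cminus (f (p1 y) (p2 y) (p3 y)) (f q1 (p2 y) (p3 y))) (Cmult (RtoC (p1 y - q1)) F1)) <= Rabs (p1 y - q1) * e1).
  { apply (mvi_C (fun u => f u (p2 y) (p3 y)) (fun u => fx u (p2 y) (p3 y))).
    - intros u. apply Hx.
    - intros u. apply (cont3_comp fx (fun u => u) (fun _ => p2 y) (fun _ => p3 y)); auto using continuous_id, continuous_const.
    - intros u Hu. apply Rlt_le. apply N1.
      + pose proof (between_abs _ _ _ Hu). lra.
      + lra.
      + lra. }
  assert (A2 : Cmod (Cminus (Cminus (f q1 (p2 y) (p3 y)) (f q1 q2 (p3 y))) (Cmult (RtoC (p2 y - q2)) F2)) <= Rabs (p2 y - q2) * e1).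
  { apply (mvi_C (fun v => f q1 v (p3 y)) (fun v => fy q1 v (p3 y))).
    - intros u. apply Hy.
    - intros u. apply (cont3_comp fy (fun _ => q1) (fun u => u) (fun _ => p3 y)); auto using continuous_id, continuous_const.
    - intros u Hu. apply Rlt_le. apply N2.
      + rewrite Rminus_diag, Rabs_R0. lra.
      + pose proof (between_abs _ _ _ Hu). lra.
      + lra. }
  assert (A3 : Cmod (Cminus (Cminus (f q1 q2 (p3 y)) (f q1 q2 q3)) (Cmult (RtoC (p3 y - q3)) F3)) <= Rabs (p3 y - q3) * e1).
  { apply (mvi_C (fun w => f q1 q2 w) (fun w => ft q1 q2 w)).
    - intros u. apply Ht.
    - intros u. apply (cont3_comp ft (fun _ => q1) (fun _ => q2) (fun u => u)); auto using continuous_id, continuous_const.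
    - intros u Hu. apply Rlt_le. apply N3.
      + rewrite Rminus_diag, Rabs_R0. lra.
      + rewrite Rminus_diag, Rabs_R0. lra.
      + pose proof (between_abs _ _ _ Hu). lra. }
  rewrite norm_C, scal_C.
  change (Cmod (Cminus (Cminus (f (p1 y) (p2 y) (p3 y)) (f q1 q2 q3))
     (Cmult (RtoC h) (Cplus (Cmult (RtoC d1) F1) (Cplus (Cmult (RtoC d2) F2) (Cmult (RtoC d3) F3))))) <= eps * Rabs h).
  match goal with |- Cmod ?X <= _ =>
    replace X with (Cplus (Cplus (Cminus (Cminus (f (p1 y) (p2 y) (p3 y)) (f q1 (p2 y) (p3 y))) (Cmult (RtoC (p1 y - q1)) F1))
                           (Cplus (Cminus (Cminus (f q1 (p2 y) (p3 y)) (f q1 q2 (p3 y))) (Cmult (RtoC (p2 y - q2)) F2))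
                                  (Cminus (Cminus (f q1 q2 (p3 y)) (f q1 q2 q3)) (Cmult (RtoC (p3 y - q3)) F3))))
                    (Cplus (Cmult (RtoC (p1 y - q1 - h * d1)) F1)
                       (Cplus (Cmult (RtoC (p2 y - q2 - h * d2)) F2) (Cmult (RtoC (p3 y - q3 - h * d3)) F3))))
  end.
  2:{ rewrite !RtoC_minus, !RtoC_mult. ring. }
  eapply Rle_trans. apply Cmod_triangle.
  eapply Rle_trans. apply Rplus_le_compat; (eapply Rle_trans; [apply Cmod_triangle | apply Rplus_le_compat; [| eapply Rle_trans; [apply Cmod_triangle| apply Rle_refl]]]); apply Rle_refl.
  rewrite !cmod_mult_R.
  pose proof (Cmod_ge_0 F1). pose proof (Cmod_ge_0 F2). pose proof (Cmod_ge_0 F3).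
  pose proof (Rabs_pos h).
  assert (E1 : (Rabs (p1 y - q1) + Rabs (p2 y - q2) + Rabs (p3 y - q3)) * e1 <= eps / 2 * Rabs h).
  { apply Rle_trans with (D * Rabs h * e1). apply Rmult_le_compat_r. lra. unfold D. lra.
    right. unfold e1. field. lra. }
  assert (E2 : e2 * Rabs h * (Cmod F1 + Cmod F2 + Cmod F3) <= eps / 2 * Rabs h).
  { apply Rle_trans with (e2 * M * Rabs h). unfold M. nra. nra. }
  assert (Rabs (p1 y - q1 - h * d1) * Cmod F1 <= e2 * Rabs h * Cmod F1) by (apply Rmult_le_compat_r; lra).
  assert (Rabs (p2 y - q2 - h * d2) * Cmod F2 <= e2 * Rabs h * Cmod F2) by (apply Rmult_le_compat_r; lra).
  assert (Rabs (p3 y - q3 - h * d3) * Cmod F3 <= e2 * Rabs h * Cmod F3) by (apply Rmult_le_compat_r; lra).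
  lra.
Qed.

Definition cont2 (G : R -> R -> C) := forall x y, continuous (fun p : R * R => G (fst p) (snd p)) (x, y).

Lemma cont2_eps (G : R -> R -> C) x y : cont2 G -> forall eps, 0 < eps ->
  exists del, 0 < del /\ forall u v, Rabs (u - x) < del -> Rabs (v - y) < del ->
    Cmod (Cminus (G u v) (G x y)) < eps.
Proof.
  intros Hc eps He. specialize (Hc x y).
  assert (Hp : 0 < eps / @norm_factor R_AbsRing C_R_NormedModule).
  { apply Rdiv_lt_0_compat; [exact He | apply norm_factor_gt_0]. }
  apply (proj1 (filterlim_locally _ _)) with (eps := mkposreal _ Hp) in Hc.
  destruct Hc as [d Hd]. exists d. split. apply cond_pos.
  intros u v Hu Hv.
  assert (Hb := Hd (u, v) (conj (ball_R _ _ _ Hu) (ball_R _ _ _ Hv))).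
  apply (@norm_compat2 R_AbsRing C_R_NormedModule) in Hb.
  rewrite norm_C in Hb. simpl in Hb.
  replace eps with (@norm_factor R_AbsRing C_R_NormedModule * (eps / @norm_factor R_AbsRing C_R_NormedModule)).
  exact Hb. field. apply Rgt_not_eq, norm_factor_gt_0.
Qed.

Lemma cont2_1 (G : R -> R -> C) th s : cont2 G -> continuous (fun u => G u s) th.
Proof.
  intros H. apply (continuous_comp (fun u => (u, s)) (fun p : R * R => G (fst p) (snd p)) th).
  apply cont_pair. apply continuous_id. apply continuous_const. apply H.
Qed.

Lemma cont2_2 (G : R -> R -> C) th s : cont2 G -> continuous (fun v => G th v) s.
Proof.
  intros H. apply (continuous_comp (fun v => (th, v)) (fun p : R * R => G (fst p) (snd p)) s).
  apply cont_pair. apply continuous_const. apply continuous_id. apply H.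
Qed.

Lemma tube (K : R -> R -> C) a b th0 : cont2 K -> forall eps, 0 < eps ->
  exists del, 0 < del /\ forall s u, Rmin a b <= s <= Rmax a b -> Rabs (u - th0) < del ->
    Cmod (Cminus (K u s) (K th0 s)) <= eps.
Proof.
  intros HK eps He.
  assert (He2 : 0 < eps / 2) by lra.
  assert (Hd : forall s, exists d : posreal, forall u v, Rabs (u - th0) < d -> Rabs (v - s) < d ->
    Cmod (Cminus (K u v) (K th0 s)) < eps / 2).
  { intros s. destruct (cont2_eps K th0 s HK _ He2) as [d [Hd H]]. exists (mkposreal d Hd). exact H. }
  set (delta := fun s => proj1_sig (constructive_indefinite_description _ (Hd s))).
  assert (Hdelta : forall s u v, Rabs (u - th0) < delta s -> Rabs (v - s) < delta s ->
    Cmod (Cminus (K u v) (K th0 s)) < eps / 2).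
  { intros s. unfold delta. destruct (constructive_indefinite_description _ (Hd s)) as [d Hds]. exact Hds. }
  destruct (compactness_value_1d (Rmin a b) (Rmax a b) delta) as [d Hc].
  exists d. split. apply cond_pos.
  intros s u Hs Hu. specialize (Hc s Hs).
  apply Rnot_lt_le. intros Hlt. apply Hc. intros [t [Ht [Hst Hdt]]].
  assert (X1 := Hdelta t u s ltac:(lra) Hst).
  assert (X2 := Hdelta t th0 s ltac:(rewrite Rminus_diag, Rabs_R0; apply cond_pos) Hst).
  assert (Heq : Cminus (K u s) (K th0 s) = Cplus (Cminus (K u s) (K th0 t)) (Copp (Cminus (K th0 s) (K th0 t)))) by ring.
  rewrite Heq in Hlt.
  pose proof (Cmod_triangle (Cminus (K u s) (K th0 t)) (Copp (Cminus (K th0 s) (K th0 t)))).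
  rewrite Cmod_opp in H. lra.
Qed.

Definition RIntC (g : R -> C) a b := RInt (V := C_R_CompleteNormedModule) g a b.

Lemma exC (g : R -> C) a b : (forall s, continuous g s) -> ex_RInt (V := C_R_CompleteNormedModule) g a b.
Proof. intros H. apply ex_RInt_continuous. intros; apply H. Qed.

Lemma dui (k K : R -> R -> C) a b th0 :
  (forall th s, isderC (fun u => k u s) th (K th s)) ->
  cont2 K -> cont2 k ->
  isderC (fun th => RIntC (k th) a b) th0 (RIntC (K th0) a b).
Proof.
  intros Hd HK Hk.
  apply derive_eps. intros eps He.
  set (e1 := eps / (Rabs (b - a) + 1)).
  assert (He1 : 0 < e1) by (unfold e1; apply Rdiv_lt_0_compat; [lra| pose proof (Rabs_pos (b - a)); lra]).
  destruct (tube K a b th0 HK e1 He1) as [d [Hd0 Ht]].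
  exists d. split. exact Hd0. intros y Hy.
  assert (I1 : ex_RInt (V := C_R_CompleteNormedModule) (k y) a b) by (apply exC; intros; apply cont2_2; exact Hk).
  assert (I2 : ex_RInt (V := C_R_CompleteNormedModule) (k th0) a b) by (apply exC; intros; apply cont2_2; exact Hk).
  assert (I3 : ex_RInt (V := C_R_CompleteNormedModule) (K th0) a b) by (apply exC; intros; apply cont2_2; exact HK).
  unfold RIntC.
  pose proof (is_RInt_minus _ _ _ _ _ _ (is_RInt_minus _ _ _ _ _ _ (RInt_correct _ _ _ I1) (RInt_correct _ _ _ I2))
     (is_RInt_scal _ _ _ (y - th0) _ (RInt_correct _ _ _ I3))) as HI.
  apply Rle_trans with (Rabs (b - a) * (Rabs (y - th0) * e1)).
  - refine (norm_RInt_le_const_abs (V := C_R_NormedModule) _ _ _ _ _ _ HI).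
    intros s Hs. simpl. rewrite norm_C, scal_C.
    apply (mvi_C (fun u => k u s) (fun u => K u s)).
    + intros u. apply Hd.
    + intros u. apply cont2_1. exact HK.
    + intros u Hu. apply Ht. exact Hs.
      pose proof (between_abs _ _ _ Hu). lra.
  - pose proof (Rabs_pos (b - a)). pose proof (Rabs_pos (y - th0)).
    apply Rle_trans with ((Rabs (b - a) * e1) * Rabs (y - th0)). right; ring.
    apply Rmult_le_compat_r. lra.
    unfold e1. apply Rle_trans with ((Rabs (b - a) + 1) * (eps / (Rabs (b - a) + 1))).
    apply Rmult_le_compat_r; [exact (Rlt_le _ _ He1) | lra]. right. field. lra.
Qed.

Lemma derC_unique g x l1 l2 : isderC g x l1 -> isderC g x l2 -> l1 = l2.
Proof.
  intros H1 H2. destruct (Ceq_dec l1 l2) as [E|NE]; [exact E|exfalso].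
  set (m := Cmod (Cminus l1 l2)).
  assert (Hm : 0 < m).
  { unfold m. apply Rnot_le_lt. intros Hle. apply NE.
    assert (Cmod (Cminus l1 l2) = 0) by (pose proof (Cmod_ge_0 (Cminus l1 l2)); lra).
    apply Cmod_eq_0 in H. replace l1 with (Cplus (Cminus l1 l2) l2) by ring.
    rewrite H. ring. }
  assert (He : 0 < m / 4) by lra.
  destruct (eps_derive g x l1 H1 _ He) as [d1 [Hd1 K1]].
  destruct (eps_derive g x l2 H2 _ He) as [d2 [Hd2 K2]].
  set (h := Rmin d1 d2 / 2).
  assert (Hh : 0 < h) by (unfold h; pose proof (Rmin_pos _ _ Hd1 Hd2); lra).
  assert (Hhd : Rabs (x + h - x) < d1 /\ Rabs (x + h - x) < d2).
  { replace (x + h - x) with h by ring. rewrite Rabs_pos_eq by lra.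
    unfold h. pose proof (Rmin_l d1 d2). pose proof (Rmin_r d1 d2). pose proof (Rmin_pos _ _ Hd1 Hd2). lra. }
  specialize (K1 (x + h) (proj1 Hhd)). specialize (K2 (x + h) (proj2 Hhd)).
  rewrite norm_C, scal_C in K1, K2.
  replace (x + h - x) with h in K1, K2 by ring.
  rewrite Rabs_pos_eq in K1, K2 by lra.
  set (A1 := Cminus (Cminus (g (x + h)) (g x)) (Cmult (RtoC h) l1)).
  set (A2 := Cminus (Cminus (g (x + h)) (g x)) (Cmult (RtoC h) l2)).
  assert (K1' : Cmod A1 <= m / 4 * h) by exact K1.
  assert (K2' : Cmod A2 <= m / 4 * h) by exact K2.
  assert (Heq : Cmult (RtoC h) (Cminus l1 l2) = Cplus A2 (Copp A1)) by (unfold A1, A2; ring).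
  pose proof (Cmod_triangle A2 (Copp A1)). rewrite Cmod_opp, <- Heq, cmod_mult_R in H.
  rewrite Rabs_pos_eq in H by lra. fold m in H. pose proof (Rmult_lt_0_compat h m Hh Hm). lra.
Qed.

Lemma cont_Cplus {T : UniformSpace} (g1 g2 : T -> C) z :
  continuous g1 z -> continuous g2 z -> continuous (fun w => Cplus (g1 w) (g2 w)) z.
Proof. intros H1 H2. exact (continuous_plus (V := C_R_NormedModule) g1 g2 z H1 H2). Qed.

Lemma cont_Cmult_R {T : UniformSpace} (d : T -> R) (g : T -> C) z :
  continuous d z -> continuous g z -> continuous (fun w => Cmult (RtoC (d w)) (g w)) z.
Proof.
  intros H1 H2. apply (continuous_ext (fun w => @scal R_AbsRing C_R_ModuleSpace (d w) (g w))).
  intros w. apply scal_C. exact (continuous_scal (V := C_R_NormedModule) d g z H1 H2).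
Qed.

Lemma rcont (h : R -> R) s : (forall s, ex_derive h s) -> continuous h s.
Proof. intros H. exact (ex_derive_continuous (K:=R_AbsRing) (V:=R_NormedModule) h s (H s)). Qed.

Lemma c2_gen (a0 a1 b1 a2 b2 : R -> R) th s :
  (forall u, continuous a0 u) -> (forall u, continuous a1 u) -> (forall u, continuous b1 u) ->
  (forall u, continuous a2 u) -> (forall u, continuous b2 u) ->
  continuous (fun p : R * R => a0 (snd p) + a1 (fst p) * b1 (snd p) + a2 (fst p) * b2 (snd p)) (th, s).
Proof.
  intros H0 H1 H2 H3 H4.
  assert (Cf : forall h : R -> R, (forall u, continuous h u) -> continuous (fun p : R * R => h (fst p)) (th, s)).
  { intros h Hh. apply (continuous_comp fst h). apply continuous_fst. apply Hh. }
  assert (Cs : forall h : R -> R, (forall u, continuous h u) -> continuous (fun p : R * R => h (snd p)) (th, s)).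
  { intros h Hh. apply (continuous_comp snd h). apply continuous_snd. apply Hh. }
  refine (continuous_plus (V := R_NormedModule) (fun p : R * R => a0 (snd p) + a1 (fst p) * b1 (snd p)) (fun p : R * R => a2 (fst p) * b2 (snd p)) _ _ _).
  refine (continuous_plus (V := R_NormedModule) (fun p : R * R => a0 (snd p)) (fun p : R * R => a1 (fst p) * b1 (snd p)) _ _ _).
  apply Cs; exact H0.
  refine (continuous_mult (K := R_AbsRing) (fun p : R * R => a1 (fst p)) (fun p : R * R => b1 (snd p)) _ _ _).
  apply Cf; exact H1. apply Cs; exact H2.
  refine (continuous_mult (K := R_AbsRing) (fun p : R * R => a2 (fst p)) (fun p : R * R => b2 (snd p)) _ _ _).
  apply Cf; exact H3. apply Cs; exact H4.
Qed.

Lemma per_n (f : HFun) : periodic_t f -> forall n x y t, f x y (t + INR n * PI) = f x y t.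
Proof.
  intros Hp n. induction n as [|n IH]; intros x y t.
  - simpl. rewrite Rmult_0_l, Rplus_0_r. reflexivity.
  - rewrite S_INR. replace (t + (INR n + 1) * PI) with ((t + INR n * PI) + PI) by ring.
    rewrite Hp. apply IH.
Qed.

Lemma shift_int (g : R -> C) c a b : (forall s, continuous g s) ->
  RIntC (fun s => g (s + c)) a b = RIntC g (a + c) (b + c).
Proof.
  intros Hg. unfold RIntC.
  pose proof (RInt_comp_lin (V:=C_R_CompleteNormedModule) g 1 c a b) as H.
  replace (1 * a + c) with (a + c) in H by ring. replace (1 * b + c) with (b + c) in H by ring.
  rewrite <- H by (apply exC; exact Hg). apply RInt_ext. intros s _.
  rewrite Rmult_1_l. symmetry. apply (scal_one (K := R_Ring)).
Qed.

Lemma per_int (g : R -> C) L c : (forall s, continuous g s) -> (forall s, g (s + L) = g s) ->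
  RIntC (fun s => g (s + c)) 0 L = RIntC g 0 L.
Proof.
  intros Hg Hp. rewrite shift_int by exact Hg. rewrite Rplus_0_l.
  unfold RIntC.
  rewrite <- (RInt_Chasles (V := C_R_CompleteNormedModule) g c L (L + c)) by (apply exC; exact Hg).
  rewrite <- (RInt_Chasles (V := C_R_CompleteNormedModule) g c 0 L) by (apply exC; exact Hg).
  pose proof (shift_int g L 0 c Hg) as E. rewrite Rplus_0_l in E. replace (c + L) with (L + c) in E by ring.
  unfold RIntC in E. rewrite <- E.
  rewrite (RInt_ext (V := C_R_CompleteNormedModule) (fun s => g (s + L)) g) by (intros; apply Hp).
  rewrite <- (opp_RInt_swap (V := C_R_CompleteNormedModule)) by (apply exC; exact Hg).
  set (X := RInt (V := C_R_CompleteNormedModule) g 0 c).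
  set (Y := RInt (V := C_R_CompleteNormedModule) g 0 L).
  change (Cplus (Cplus (Copp X) Y) X = Y). ring.
Qed.

Definition q1 r x s := x + sqrt r * cos (s / sqrt r).
Definition q2 r y s := y + sqrt r * sin (s / sqrt r).
Definition q3 r x y t s := t + / 2 * sqrt r * s + / 2 * (x * (sqrt r * sin (s / sqrt r)) - y * (sqrt r * cos (s / sqrt r))).
Definition ig (f : HFun) r x y t s := f (q1 r x s) (q2 r y s) (q3 r x y t s).

Lemma Ir_ig a b f x y t : Ir a b f x y t = RIntC (ig f (ratio a b) x y t) 0 (2 * PI * sqrt (INR a * INR b)).
Proof. reflexivity. Qed.

Lemma rfacts a b : (0 < a)%nat -> (0 < b)%nat ->
  0 < ratio a b /\ 0 < sqrt (ratio a b) /\ sqrt (ratio a b) * sqrt (ratio a b) = ratio a b /\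
  sqrt (INR a * INR b) = sqrt (ratio a b) * INR b /\ ratio a b * INR b = INR a.
Proof.
  intros Ha Hb. apply lt_0_INR in Ha. apply lt_0_INR in Hb.
  assert (Hr : 0 < ratio a b) by (unfold ratio; apply Rdiv_lt_0_compat; lra).
  split; [exact Hr|]. split; [apply sqrt_lt_R0; exact Hr|]. split; [apply sqrt_sqrt; lra|].
  split.
  - replace (INR a * INR b) with (ratio a b * (INR b * INR b)) by (unfold ratio; field; lra).
    rewrite sqrt_mult by nra. rewrite sqrt_square by lra. reflexivity.
  - unfold ratio; field; lra.
Qed.

Lemma cont_ig (f : HFun) r x y t s : 0 < r -> cont3 f -> continuous (ig f r x y t) s.
Proof.
  intros Hr Hf. unfold ig.
  apply (cont3_comp f (q1 r x) (q2 r y) (q3 r x y t)); [exact Hf| | |];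
  apply rcont; intros; unfold q1, q2, q3; auto_derive; auto.
Qed.

Lemma ig_per a b (f : HFun) x y t s : (0 < a)%nat -> (0 < b)%nat -> periodic_t f ->
  ig f (ratio a b) x y t (s + 2 * PI * sqrt (INR a * INR b)) = ig f (ratio a b) x y t s.
Proof.
  intros Ha Hb Hp. destruct (rfacts a b Ha Hb) as [Hr [Hsr [Hss [HL Hrb]]]].
  unfold ig, q1, q2, q3. rewrite HL.
  set (r := ratio a b) in *. set (sr := sqrt r) in *.
  replace ((s + 2 * PI * (sr * INR b)) / sr) with (s / sr + 2 * INR b * PI) by (field; lra).
  rewrite cos_period, sin_period.
  match goal with |- f ?A ?B ?C = f ?A ?B ?D => replace C with (D + INR a * PI);
    [apply per_n; exact Hp | ] end.
  rewrite <- Hrb. rewrite <- Hss. field.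
Qed.

Lemma part1 a b f : (0 < a)%nat -> (0 < b)%nat -> Cc_infty_Hbar f ->
  forall th x y t, Ir a b (Rot th f) x y t =
     Ir a b f (rotx th x y) (roty th x y) (t - / 2 * ratio a b * th).
Proof.
  intros Ha Hb [Hs [Hp _]] th x y t. rewrite !Ir_ig.
  destruct (rfacts a b Ha Hb) as [Hr [Hsr [Hss [HL Hrb]]]].
  assert (Cf : cont3 f) by exact (proj1 (Hs 0%nat)).
  set (G := ig f (ratio a b) (rotx th x y) (roty th x y) (t - / 2 * ratio a b * th)).
  transitivity (RIntC (fun s => G (s + sqrt (ratio a b) * th)) 0 (2 * PI * sqrt (INR a * INR b))).
  - unfold RIntC. apply (RInt_ext (V := C_R_CompleteNormedModule)). intros s _.
    unfold G, ig, Rot, q1, q2, q3.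
    set (r := ratio a b) in *. set (sr := sqrt r) in *.
    replace ((s + sr * th) / sr) with (s / sr + th) by (field; lra).
    rewrite cos_plus, sin_plus.
    set (cp := cos (s / sr)). set (sp := sin (s / sr)). set (ct := cos th). set (st := sin th).
    assert (Hsc : st * st + ct * ct = 1) by (unfold st, ct; pose proof (sin2_cos2 th) as H; unfold Rsqr in H; lra).
    unfold rotx, roty. fold ct st.
    f_equal; try ring.
    rewrite <- Hss.
    transitivity (t + / 2 * sr * s + / 2 * (sr * (x * sp - y * cp) * (st * st + ct * ct))).
    + rewrite Hsc. field.
    + field.
  - apply per_int.
    + intros s. apply cont_ig; assumption.
    + intros s. apply ig_per; assumption.
Qed.

Lemma drotx th u v : is_derive (fun th => rotx th u v) th (- sin th * u - cos th * v).
Proof. unfold rotx. auto_derive. auto. ring. Qed.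
Lemma droty th u v : is_derive (fun th => roty th u v) th (cos th * u - sin th * v).
Proof. unfold roty. auto_derive. auto. ring. Qed.
Lemma rotx0 u v : rotx 0 u v = u.
Proof. unfold rotx. rewrite cos_0, sin_0. ring. Qed.
Lemma roty0 u v : roty 0 u v = v.
Proof. unfold roty. rewrite cos_0, sin_0. ring. Qed.

Lemma lin_id (c1 c2 c3 a1 a2 a3 b1 b2 b3 e1 e2 e3 k l : R) (F1 F2 F3 : C) :
  c1 = a1 - k * b1 + l * e1 -> c2 = a2 - k * b2 + l * e2 -> c3 = a3 - k * b3 + l * e3 ->
  Cplus (Cmult (RtoC c1) F1) (Cplus (Cmult (RtoC c2) F2) (Cmult (RtoC c3) F3)) =
  Cplus (Cminus (Cplus (Cmult (RtoC a1) F1) (Cplus (Cmult (RtoC a2) F2) (Cmult (RtoC a3) F3)))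
                (Cmult (RtoC k) (Cplus (Cmult (RtoC b1) F1) (Cplus (Cmult (RtoC b2) F2) (Cmult (RtoC b3) F3)))))
        (Cmult (RtoC l) (Cplus (Cmult (RtoC e1) F1) (Cplus (Cmult (RtoC e2) F2) (Cmult (RtoC e3) F3)))).
Proof.
  intros -> -> ->. rewrite !RtoC_plus, !RtoC_minus, !RtoC_mult. ring.
Qed.

Lemma c2_mk (F : R -> R -> R) a0 a1 b1 a2 b2 th s :
  (forall u v, F u v = a0 v + a1 u * b1 v + a2 u * b2 v) ->
  (forall u, ex_derive a0 u) -> (forall u, ex_derive a1 u) -> (forall u, ex_derive b1 u) ->
  (forall u, ex_derive a2 u) -> (forall u, ex_derive b2 u) ->
  continuous (fun p : R * R => F (fst p) (snd p)) (th, s).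
Proof.
  intros HF H0 H1 H2 H3 H4.
  apply (continuous_ext (fun p : R * R => a0 (snd p) + a1 (fst p) * b1 (snd p) + a2 (fst p) * b2 (snd p))).
  intros p. rewrite HF. reflexivity.
  apply c2_gen; intros; apply rcont; assumption.
Qed.

Lemma c2_snd (h : R -> R) u v : (forall s, ex_derive h s) -> continuous (fun p : R * R => h (snd p)) (u, v).
Proof. intros H. apply (continuous_comp snd h). apply continuous_snd. apply rcont. exact H. Qed.
Lemma c2_fst (h : R -> R) u v : (forall s, ex_derive h s) -> continuous (fun p : R * R => h (fst p)) (u, v).
Proof. intros H. apply (continuous_comp fst h). apply continuous_fst. apply rcont. exact H. Qed.

Ltac exd := intros; unfold q1, q2, q3, rotx, roty; auto_derive; auto.

Lemma part2 a b f : (0 < a)%nat -> (0 < b)%nat -> Cc_infty_Hbar f ->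
  forall dthf : HFun,
     (forall x y t, is_derive (K := R_AbsRing) (V := C_R_NormedModule)
                      (fun th => Rot th f x y t) 0 (dthf x y t)) ->
     forall x y t,
       exists dth dT : C,
         is_derive (K := R_AbsRing) (V := C_R_NormedModule)
           (fun th => Rot th (Ir a b f) x y t) 0 dth /\
         is_derive (K := R_AbsRing) (V := C_R_NormedModule)
           (fun s => Ir a b f x y s) t dT /\
         Ir a b dthf x y t = Cminus dth (Cmult (RtoC (/ 2 * ratio a b)) dT).
Proof.
  intros Ha Hb [Hs [Hp _]] dthf Hdthf x y t.
  destruct (rfacts a b Ha Hb) as [Hr [Hsr [Hss [HL Hrb]]]].
  destruct (Hs 1%nat) as [Cf [fx [fy [ft [Dx [Dy [Dt [[Cx _] [[Cy _] [Ct _]]]]]]]]]].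
  set (r := ratio a b) in *. set (L := 2 * PI * sqrt (INR a * INR b)).
  assert (Hsr0 : sqrt r <> 0) by lra.
  assert (Hdth : forall u v w, dthf u v w =
    Cplus (Cmult (RtoC (- sin 0 * u - cos 0 * v)) (fx u v w))
      (Cplus (Cmult (RtoC (cos 0 * u - sin 0 * v)) (fy u v w)) (Cmult (RtoC 0) (ft u v w)))).
  { intros u v w. apply (derC_unique (fun th => Rot th f u v w) 0). apply Hdthf.
    pose proof (chain3 f fx fy ft (fun th => rotx th u v) (fun th => roty th u v) (fun _ => w) _ _ 0 0
       Dx Dy Dt Cx Cy Ct (drotx 0 u v) (droty 0 u v) (is_derive_const (K:=R_AbsRing) w 0)) as H.
    cbv beta in H. rewrite rotx0, roty0 in H. exact H. }
  set (kT := fun tau s => ig f r x y tau s).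
  set (KT := fun tau s => Cplus (Cmult (RtoC 0) (fx (q1 r x s) (q2 r y s) (q3 r x y tau s)))
      (Cplus (Cmult (RtoC 0) (fy (q1 r x s) (q2 r y s) (q3 r x y tau s)))
             (Cmult (RtoC 1) (ft (q1 r x s) (q2 r y s) (q3 r x y tau s))))).
  assert (DT : forall tau s, isderC (fun u => kT u s) tau (KT tau s)).
  { intros tau s. apply (chain3 f fx fy ft (fun _ => q1 r x s) (fun _ => q2 r y s) (fun u => q3 r x y u s) 0 0 1 tau Dx Dy Dt Cx Cy Ct).
    auto_derive; auto. auto_derive; auto.
    unfold q3. auto_derive. auto. ring. }
  assert (CQT1 : forall u v, continuous (fun p : R * R => q1 r x (snd p)) (u, v)) by (intros; apply c2_snd; exd).
  assert (CQT2 : forall u v, continuous (fun p : R * R => q2 r y (snd p)) (u, v)) by (intros; apply c2_snd; exd).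
  assert (CQT3 : forall u v, continuous (fun p : R * R => q3 r x y (fst p) (snd p)) (u, v)).
  { intros. apply (c2_mk (fun a b => q3 r x y a b) (q3 r x y 0) (fun a => a) (fun _ => 1) (fun _ => 0) (fun _ => 0)); [intros; unfold q3; ring| exd ..]. }
  assert (CkT : cont2 kT).
  { intros u v. unfold kT, ig. cbv beta. apply cont3_comp; auto. }
  assert (CKT : cont2 KT).
  { intros u v. unfold KT. cbv beta.
    apply cont_Cplus; [| apply cont_Cplus];
    (apply cont_Cmult_R; [apply continuous_const | apply cont3_comp; [assumption | apply CQT1 | apply CQT2 | apply CQT3]]). }
  pose proof (dui kT KT 0 L t DT CKT CkT) as HdT.
  set (k2 := fun th s => ig f r (rotx th x y) (roty th x y) t s).
  set (d3f := fun th s => / 2 * ((- sin th * x - cos th * y) * (sqrt r * sin (s / sqrt r)) - (cos th * x - sin th * y) * (sqrt r * cos (s / sqrt r)))).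
  set (K2 := fun th s =>
     Cplus (Cmult (RtoC (- sin th * x - cos th * y)) (fx (q1 r (rotx th x y) s) (q2 r (roty th x y) s) (q3 r (rotx th x y) (roty th x y) t s)))
      (Cplus (Cmult (RtoC (cos th * x - sin th * y)) (fy (q1 r (rotx th x y) s) (q2 r (roty th x y) s) (q3 r (rotx th x y) (roty th x y) t s)))
             (Cmult (RtoC (d3f th s)) (ft (q1 r (rotx th x y) s) (q2 r (roty th x y) s) (q3 r (rotx th x y) (roty th x y) t s))))).
  assert (D2 : forall th s, isderC (fun u => k2 u s) th (K2 th s)).
  { intros th s. apply (chain3 f fx fy ft (fun u => q1 r (rotx u x y) s) (fun u => q2 r (roty u x y) s)
       (fun u => q3 r (rotx u x y) (roty u x y) t s) _ _ (d3f th s) th Dx Dy Dt Cx Cy Ct).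
    - unfold q1, rotx. auto_derive. auto. ring.
    - unfold q2, roty. auto_derive. auto. ring.
    - unfold q3, rotx, roty, d3f. auto_derive. auto. ring. }
  assert (CQ1 : forall u v, continuous (fun p : R * R => q1 r (rotx (fst p) x y) (snd p)) (u, v)).
  { intros. apply (c2_mk (fun a b => q1 r (rotx a x y) b) (fun b => sqrt r * cos (b / sqrt r)) (fun a => rotx a x y) (fun _ => 1) (fun _ => 0) (fun _ => 0)); [intros; unfold q1; ring| exd ..]. }
  assert (CQ2 : forall u v, continuous (fun p : R * R => q2 r (roty (fst p) x y) (snd p)) (u, v)).
  { intros. apply (c2_mk (fun a b => q2 r (roty a x y) b) (fun b => sqrt r * sin (b / sqrt r)) (fun a => roty a x y) (fun _ => 1) (fun _ => 0) (fun _ => 0)); [intros; unfold q2; ring| exd ..]. }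
  assert (CQ3 : forall u v, continuous (fun p : R * R => q3 r (rotx (fst p) x y) (roty (fst p) x y) t (snd p)) (u, v)).
  { intros. apply (c2_mk (fun a b => q3 r (rotx a x y) (roty a x y) t b) (fun b => t + / 2 * sqrt r * b) (fun a => / 2 * rotx a x y)
       (fun b => sqrt r * sin (b / sqrt r)) (fun a => - / 2 * roty a x y) (fun b => sqrt r * cos (b / sqrt r))); [intros; unfold q3; ring| exd ..]. }
  assert (CD1 : forall u v, continuous (fun p : R * R => - sin (fst p) * x - cos (fst p) * y) (u, v)).
  { intros. apply (c2_fst (fun a => - sin a * x - cos a * y)). exd. }
  assert (CD2 : forall u v, continuous (fun p : R * R => cos (fst p) * x - sin (fst p) * y) (u, v)).
  { intros. apply (c2_fst (fun a => cos a * x - sin a * y)). exd. }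
  assert (CD3 : forall u v, continuous (fun p : R * R => d3f (fst p) (snd p)) (u, v)).
  { intros. apply (c2_mk d3f (fun _ => 0) (fun a => / 2 * (- sin a * x - cos a * y)) (fun b => sqrt r * sin (b / sqrt r))
       (fun a => - / 2 * (cos a * x - sin a * y)) (fun b => sqrt r * cos (b / sqrt r))); [intros; unfold d3f; ring| exd ..]. }
  assert (Ck2 : cont2 k2).
  { intros u v. unfold k2, ig. cbv beta. apply cont3_comp; auto. }
  assert (CK2 : cont2 K2).
  { intros u v. unfold K2. cbv beta.
    apply cont_Cplus; [| apply cont_Cplus].
    - apply cont_Cmult_R; [apply CD1 | apply cont3_comp; [assumption | apply CQ1 | apply CQ2 | apply CQ3]].
    - apply cont_Cmult_R; [apply CD2 | apply cont3_comp; [assumption | apply CQ1 | apply CQ2 | apply CQ3]].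
    - apply cont_Cmult_R; [apply CD3 | apply cont3_comp; [assumption | apply CQ1 | apply CQ2 | apply CQ3]]. }
  pose proof (dui k2 K2 0 L 0 D2 CK2 Ck2) as Hdth2.
  set (hh := fun s => ig f r x y t s).
  set (e3 := fun s => / 2 * sqrt r + / 2 * (x * cos (s / sqrt r) + y * sin (s / sqrt r))).
  set (Hd := fun s => Cplus (Cmult (RtoC (- sin (s / sqrt r))) (fx (q1 r x s) (q2 r y s) (q3 r x y t s)))
      (Cplus (Cmult (RtoC (cos (s / sqrt r))) (fy (q1 r x s) (q2 r y s) (q3 r x y t s)))
             (Cmult (RtoC (e3 s)) (ft (q1 r x s) (q2 r y s) (q3 r x y t s))))).
  assert (DH : forall s, isderC hh s (Hd s)).
  { intros s. apply (chain3 f fx fy ft (q1 r x) (q2 r y) (q3 r x y t) _ _ (e3 s) s Dx Dy Dt Cx Cy Ct).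
    - unfold q1. auto_derive. auto. unfold Rdiv. field. exact Hsr0.
    - unfold q2. auto_derive. auto. unfold Rdiv. field. exact Hsr0.
    - unfold q3, e3. auto_derive. auto. unfold Rdiv. field. exact Hsr0. }
  assert (CH : forall s, continuous Hd s).
  { intros s. unfold Hd, e3. cbv beta.
    apply cont_Cplus; [| apply cont_Cplus];
    (apply cont_Cmult_R; [apply rcont; exd | apply cont3_comp; [assumption | apply rcont; exd | apply rcont; exd | apply rcont; exd]]). }
  pose proof (is_RInt_derive (V := C_R_CompleteNormedModule) hh Hd 0 L (fun s _ => DH s) (fun s _ => CH s)) as IH.
  assert (Hper : hh L = hh 0).
  { unfold hh, L. rewrite <- (Rplus_0_l (2 * PI * sqrt (INR a * INR b))). apply ig_per; assumption. }
  exists (RIntC (K2 0) 0 L), (RIntC (KT t) 0 L).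
  split; [| split].
  - eapply is_derive_ext; [| exact Hdth2]. intros; reflexivity.
  - eapply is_derive_ext; [| exact HdT]. intros; reflexivity.
  - change (RIntC (ig dthf r x y t) 0 L = Cminus (RIntC (K2 0) 0 L) (Cmult (RtoC (/ 2 * r)) (RIntC (KT t) 0 L))).
    transitivity (RIntC (fun s => plus (minus (K2 0 s) (scal (/ 2 * r) (KT t s))) (scal (sqrt r) (Hd s))) 0 L).
    + unfold RIntC. apply (RInt_ext (V:=C_R_CompleteNormedModule)). intros s _.
      unfold ig. rewrite Hdth. rewrite !scal_C. unfold K2, KT, Hd, d3f, e3. cbv beta.
      rewrite rotx0, roty0, sin_0, cos_0.
      apply lin_id; unfold q1, q2.
      * ring.
      * ring.
      * replace (/ 2 * r) with (/ 2 * (sqrt r * sqrt r)) by (rewrite Hss; reflexivity). field.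
    + assert (IK2 : ex_RInt (V := C_R_CompleteNormedModule) (K2 0) 0 L) by (apply exC; intros; apply cont2_2; exact CK2).
      assert (IKT : ex_RInt (V := C_R_CompleteNormedModule) (KT t) 0 L) by (apply exC; intros; apply cont2_2; exact CKT).
      unfold RIntC.
      transitivity (@plus C_R_CompleteNormedModule (minus (RInt (V := C_R_CompleteNormedModule) (K2 0) 0 L) (scal (/ 2 * r) (RInt (V := C_R_CompleteNormedModule) (KT t) 0 L)))
         (scal (sqrt r) (minus (hh L) (hh 0)))).
      { apply is_RInt_unique. exact (is_RInt_plus _ _ _ _ _ _ (is_RInt_minus _ _ _ _ _ _ (RInt_correct _ _ _ IK2)
         (is_RInt_scal _ _ _ (/ 2 * r) _ (RInt_correct _ _ _ IKT))) (is_RInt_scal _ _ _ (sqrt r) _ IH)). }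
      rewrite Hper, minus_eq_zero. rewrite !scal_C.
      match goal with |- plus ?A (Cmult ?B _) = ?RR => change (Cplus A (Cmult B (RtoC 0)) = RR) end. rewrite Cmult_0_r, Cplus_0_r. reflexivity.
Qed.


Theorem mainTheorem11 :
  forall (a b : nat), (0 < a)%nat -> (0 < b)%nat -> Nat.gcd a b = 1%nat ->
  forall f : HFun, Cc_infty_Hbar f ->
  (forall th x y t,
     Ir a b (Rot th f) x y t =
     Ir a b f (rotx th x y) (roty th x y) (t - / 2 * ratio a b * th)) /\
  (forall dthf : HFun,
     (forall x y t, is_derive (K := R_AbsRing) (V := C_R_NormedModule)
                      (fun th => Rot th f x y t) 0 (dthf x y t)) ->
     forall x y t,
       exists dth dT : C,
         is_derive (K := R_AbsRing) (V := C_R_NormedModule)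
           (fun th => Rot th (Ir a b f) x y t) 0 dth /\
         is_derive (K := R_AbsRing) (V := C_R_NormedModule)
           (fun s => Ir a b f x y s) t dT /\
         Ir a b dthf x y t = Cminus dth (Cmult (RtoC (/ 2 * ratio a b)) dT)).
Proof.
  intros a b Ha Hb _ f Hf. split.
  - apply part1; assumption.
  - intros dthf Hd. apply part2; assumption.
Qed.
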